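(* Let $L$ be a BL-comet. Then $L$ is a BL-chain if and only if $\mathrm{pivot}(L)^{\ast\ast}=\mathrm{pivot}(L)$.
   Context: A (commutative) residuated lattice is an algebra $(L,\wedge,\vee,\odot,\rightarrow,0,1)$ such that $(L,\wedge,\vee,0,1)$ is a bounded lattice, $(L,\odot,1)$ is a commutative ordered monoid, and $z\le x\rightarrow y$ iff $x\odot z\le y$ for all $x,y,z\in L$. For $x\in L$ put $x^\ast=x\rightarrow 0$. A BL-algebra is a residuated lattice satisfying $(x\rightarrow y)\vee(y\rightarrow x)=1$ (prelinearity) and $x\odot(x\rightarrow y)=x\wedge y$ (divisibility). A BL-chain is a BL-algebra whose lattice order is total. An element $x$ is idempotent if $x\odot x=x$. For a finite BL-algebra $L$, let $\mathcal{I}(L)$ be its set of idempotent elements; for $x\in\mathcal{I}(L)$ let $\mathcal{C}(x)=\{y\in\mathcal{I}(L): x,y \text{ comparable}\}$; let $\mathcal{D}(L)$ be the set of $x\in\mathcal{I}(L)$ such that $\mathcal{C}(x)=\mathcal{I}(L)$ and $\{y\in\mathcal{I}(L): y\le x\}$ is a chain ($0\in\mathcal{D}(L)$). A finite BL-algebra $L$ is a BL-comet if $\max\mathcal{D}(L)\neq 0$; in that case $\mathrm{pivot}(L)=\max\mathcal{D}(L)$. *)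

(* Defs.v *)
From mathcomp Require Import all_boot.
Set Implicit Arguments. Unset Strict Implicit. Unset Printing Implicit Defensive.

Record rl_ops (T : Type) := RLOps {
  rmeet : T -> T -> T;
  rjoin : T -> T -> T;
  rmul  : T -> T -> T;
  rimp  : T -> T -> T;
  rzero : T;
  rone  : T }.

Section BL.
Variables (T : finType) (A : rl_ops T).

Definition rle (x y : T) : Prop := rmeet A x y = x.

Definition residuated_lattice : Prop :=
  (forall x y z, rmeet A x (rmeet A y z) = rmeet A (rmeet A x y) z) /\
  (forall x y z, rjoin A x (rjoin A y z) = rjoin A (rjoin A x y) z) /\
  (forall x y, rmeet A x y = rmeet A y x) /\
  (forall x y, rjoin A x y = rjoin A y x) /\
  (forall x y, rmeet A x (rjoin A x y) = x) /\
  (forall x y, rjoin A x (rmeet A x y) = x) /\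
  (forall x, rle (rzero A) x) /\
  (forall x, rle x (rone A)) /\
  (forall x y z, rmul A x (rmul A y z) = rmul A (rmul A x y) z) /\
  (forall x y, rmul A x y = rmul A y x) /\
  (forall x, rmul A x (rone A) = x) /\
  (forall x y z, rle x y -> rle (rmul A x z) (rmul A y z)) /\
  (forall x y z, rle z (rimp A x y) <-> rle (rmul A x z) y).

Definition BL_algebra : Prop :=
  residuated_lattice /\
  (forall x y, rjoin A (rimp A x y) (rimp A y x) = rone A) /\
  (forall x y, rmul A x (rimp A x y) = rmeet A x y).

Definition rstar (x : T) : T := rimp A x (rzero A).

Definition BL_chain : Prop := BL_algebra /\ (forall x y, rle x y \/ rle y x).

Definition idempotent (x : T) : Prop := rmul A x x = x.

Definition comparable (x y : T) : Prop := rle x y \/ rle y x.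

Definition in_D (x : T) : Prop :=
  idempotent x /\
  (forall y, idempotent y -> comparable x y) /\
  (forall y z, idempotent y -> rle y x -> idempotent z -> rle z x ->
     comparable y z).

Definition is_max_D (p : T) : Prop :=
  in_D p /\ forall x, in_D x -> rle x p.

Definition BL_comet_with_pivot (p : T) : Prop :=
  BL_algebra /\ is_max_D p /\ p <> rzero A.

End BL.

(* Main.v *)
Require Import Defs.
From mathcomp Require Import all_boot.
From Stdlib Require Import Classical.
Set Implicit Arguments. Unset Strict Implicit.

Section Aux.
Variables (T : finType) (A : rl_ops T).
Local Notation m := (rmeet A).
Local Notation j := (rjoin A).
Local Notation mul := (rmul A).
Local Notation imp := (rimp A).
Local Notation z0 := (rzero A).
Local Notation o1 := (rone A).
Local Notation le := (rle A).

Hypothesis mA : forall x y z, m x (m y z) = m (m x y) z.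
Hypothesis jA : forall x y z, j x (j y z) = j (j x y) z.
Hypothesis mC : forall x y, m x y = m y x.
Hypothesis jC : forall x y, j x y = j y x.
Hypothesis ab1 : forall x y, m x (j x y) = x.
Hypothesis ab2 : forall x y, j x (m x y) = x.
Hypothesis le0 : forall x, le z0 x.
Hypothesis le1 : forall x, le x o1.
Hypothesis mulA : forall x y z, mul x (mul y z) = mul (mul x y) z.
Hypothesis mulC : forall x y, mul x y = mul y x.
Hypothesis mul1 : forall x, mul x o1 = x.
Hypothesis mulmono : forall x y z, le x y -> le (mul x z) (mul y z).
Hypothesis res : forall x y z, le z (imp x y) <-> le (mul x z) y.
Hypothesis prel : forall x y, j (imp x y) (imp y x) = o1.
Hypothesis div : forall x y, mul x (imp x y) = m x y.

Lemma mxx x : m x x = x.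
Proof. have := ab1 x (m x x). by rewrite ab2. Qed.

Lemma le_refl x : le x x.
Proof. exact: mxx. Qed.

Lemma le_anti x y : le x y -> le y x -> x = y.
Proof. rewrite /rle => h1 h2. by rewrite -h1 mC h2. Qed.

Lemma le_trans x y z : le x y -> le y z -> le x z.
Proof. rewrite /rle => h1 h2. by rewrite -h1 -mA h2. Qed.

Lemma le_join x y : le x y <-> j x y = y.
Proof.
split; rewrite /rle => h.
- by rewrite -h jC mC ab2.
- by rewrite -h ab1.
Qed.

Lemma jub_l x y : le x (j x y).
Proof. exact: ab1. Qed.
Lemma jub_r x y : le y (j x y).
Proof. rewrite jC; exact: ab1. Qed.
Lemma jlub x y z : le x z -> le y z -> le (j x y) z.
Proof. move=> /le_join h1 /le_join h2. apply/le_join. by rewrite -jA h2 h1. Qed.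

Lemma join0 x : j x z0 = x.
Proof. rewrite jC. by apply/le_join. Qed.

Lemma mul1l x : mul o1 x = x.
Proof. by rewrite mulC mul1. Qed.

Lemma mulmono_r x y z : le x y -> le (mul z x) (mul z y).
Proof. rewrite (mulC z x) (mulC z y). exact: mulmono. Qed.

Lemma mul_le_r x y : le (mul x y) y.
Proof. rewrite -{2}(mul1l y). apply: mulmono. exact: le1. Qed.

Lemma mul_le_l x y : le (mul x y) x.
Proof. rewrite mulC. exact: mul_le_r. Qed.

Lemma yoneda x y : (forall w, le w x <-> le w y) -> x = y.
Proof.
move=> h. apply: le_anti; first by apply/h; exact: le_refl.
by apply/h; exact: le_refl.
Qed.

Lemma mul_join x u v : le (mul x (j u v)) (j (mul x u) (mul x v)).
Proof.
apply/res. apply: jlub; apply/res; [exact: jub_l | exact: jub_r].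
Qed.

Lemma one_le x : le o1 x -> x = o1.
Proof. move=> h. apply: le_anti => //. Qed.

Lemma neg_idem e : mul e e = e -> mul (imp e z0) (imp e z0) = imp e z0.
Proof.
move=> he. set n := imp e z0.
have hen : imp e n = n.
  apply: yoneda => w. rewrite /n !res mulA he. by [].
have h0 : mul n (imp n e) = z0.
  rewrite div mC -div hen /n div mC. exact: le0.
apply: le_anti; first exact: mul_le_l.
have : le (mul n o1) (j (mul n (imp e n)) (mul n (imp n e))).
  rewrite -(prel e n). exact: mul_join.
by rewrite mul1 h0 join0 hen.
Qed.

Lemma join_mul a b c : j a b = o1 -> j c b = o1 -> j (mul a c) b = o1.
Proof.
move=> hab hcb. apply: one_le.
have h1 := mul_join (j a b) c b.
rewrite hcb mul1 in h1.
apply: (le_trans _ (le_trans h1 _)); first by rewrite hab; exact: le_refl.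
apply: jlub; last first.
  apply: le_trans (jub_r _ _). exact: mul_le_r.
rewrite mulC. apply: (le_trans (mul_join _ _ _)). apply: jlub.
  rewrite mulC. exact: jub_l.
apply: le_trans (jub_r _ _). exact: mul_le_r.
Qed.

Definition pw a n := iter n (mul a) o1.

Lemma pw_dec a n : le (pw a n.+1) (pw a n).
Proof. exact: mul_le_r. Qed.

Lemma pw_anti a i k : le (pw a (i + k)) (pw a i).
Proof.
elim: k => [|k IH]; first by rewrite addn0; exact: le_refl.
rewrite addnS. exact: le_trans (pw_dec _ _) IH.
Qed.

Lemma pw_stab a : exists n, pw a n.+1 = pw a n.
Proof.
apply: NNPP => hn.
have inj : injective (fun i : 'I_(#|T|.+1) => pw a i).
  move=> i k /= hik. apply: val_inj => /=.
  wlog lt : i k hik / (i < k)%N.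
    move=> W. case: (ltngtP i k) => h; [exact: W | | by []].
    symmetry. exact: W.
  exfalso. apply: hn. exists i. apply: le_anti; first exact: pw_dec.
  have -> : pw a i = pw a (i.+1 + (k - i.+1)) by rewrite subnKC.
  exact: pw_anti.
have := @leq_card _ T _ inj. by rewrite card_ord ltnn.
Qed.

Lemma idem_below a : exists e, mul e e = e /\ le e a /\
   (forall b, j a b = o1 -> j e b = o1).
Proof.
have [n hn] := pw_stab a.
have hea : mul (pw a n) a = pw a n by rewrite mulC.
have hek : forall k, mul (pw a n) (pw a k) = pw a n.
  elim=> [|k IH] /=; first exact: mul1.
  by rewrite mulA hea.
exists (pw a n). split; first exact: hek. split.
  rewrite -hea. exact: mul_le_r.
move=> b hab. elim: (n) => [|k IH] /=.
  rewrite jC; apply/le_join; exact: le1.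
exact: join_mul.
Qed.


Lemma main_aux p : is_max_D A p -> p <> z0 ->
  (BL_chain A <-> rstar A (rstar A p) = p).
Proof.
move=> [[pid [pc pD]] pmax] p0.
have z1 : rstar A o1 = z0.
  apply: le_anti; last exact: le0.
  have := proj1 (res o1 z0 (rstar A o1)) (le_refl _).
  by rewrite /rle (mulC o1) mul1.
have z2 : rstar A z0 = o1.
  apply: le_anti; first exact: le1.
  apply/res. rewrite mul1. exact: le_refl.
split.
- move=> [BL tot].
  have h1 : in_D A o1.
    split; first exact: mul1.
    split; first by move=> y _; exact: tot.
    by move=> y z _ _ _ _; exact: tot.
  have -> : p = o1 by apply: le_anti; [exact: le1 | exact: pmax].
  by rewrite z1 z2.
- move=> hp.
  set q := rstar A p.
  have qid : mul q q = q by apply: neg_idem.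
  have pq : mul p q = z0.
    rewrite /q /rstar div mC. exact: le0.
  have q0 : q = z0.
    case: (pc q qid) => h.
    + exfalso. apply: p0. apply: le_anti; last exact: le0.
      rewrite -pid -pq. exact: mulmono_r.
    + apply: le_anti; last exact: le0.
      rewrite -qid -pq. exact: mulmono.
  have p1 : p = o1 by rewrite -hp -/q q0 z2.
  split.
    exact: (conj (conj mA (conj jA (conj mC (conj jC (conj ab1 (conj ab2 (conj le0 (conj le1 (conj mulA (conj mulC (conj mul1 (conj mulmono res)))))))))))) (conj prel div)).
  move=> x y.
  have [e [eid [ea eb]]] := idem_below (imp x y).
  have [f [fid [fa fb]]] := idem_below (imp y x).
  have ef : j e f = o1.
    apply: eb. rewrite jC. apply: fb. by rewrite jC prel.
  have toone : forall u v, le u v -> j u v = o1 -> le o1 v.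
    move=> u v /le_join -> ->; exact: le_refl.
  have key : forall u v w, le o1 u -> le u (imp v w) -> le v w.
    move=> u v w h1 h2. have := le_trans h1 h2.
    move/res. by rewrite mul1.
  have [hle|hle] : le e f \/ le f e.
    apply: pD => //; rewrite p1; exact: le1.
  + right. apply: (key f) => //. exact: toone hle ef.
  + left. apply: (key e) => //. apply: toone hle _. by rewrite jC.
Qed.

End Aux.

Theorem proposition1p11 (T : finType) (A : rl_ops T) (p : T) :
  BL_comet_with_pivot A p ->
  (BL_chain A <-> rstar A (rstar A p) = p).
Proof.
move=> [[RL [prel div]] [hmax p0]].
move: RL => [mA [jA [mC [jC [ab1 [ab2 [le0 [le1 [mulA [mulC [mul1 [mulmono res]]]]]]]]]]]].
exact: (main_aux mA jA mC jC ab1 ab2 le0 le1 mulA mulC mul1 mulmono res prel div hmax p0).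
Qed.
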